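(* Let $k$ be a positive integer, $a_1>a_2>\cdots>a_{k+2}$ real numbers in $[a,b]$, and $w_1,\dots,w_{k+2}$ real weights with $w_1\ge 0$ and $(-1)^kw_{k+2}\ge 0$, such that $\sum_{i=1}^{k+2}w_ia_i^j=0$ for all integers $0\le j<k$. Then $\sum_{i=1}^{k+2}w_if(a_i)\ge 0$ for every $k$ times differentiable $f:[a,b]\to\mathbb{R}$ with $f^{(k)}\ge 0$. *)

(* Defs.v *)
From Stdlib Require Import Reals.
Open Scope R_scope.

(* [kdiff_on k a b f g]: f is k times differentiable on [a,b], with
   g i its i-th derivative (g 0 = f on [a,b]); derivatives are taken
   relative to the domain [a,b] (one-sided at the endpoints), via Stdlib's D_in. *)
Definition kdiff_on (k : nat) (a b : R) (f : R -> R) (g : nat -> R -> R) : Prop :=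
  (forall x, a <= x <= b -> g 0%nat x = f x) /\
  (forall (i : nat) (x : R), (i < k)%nat -> a <= x <= b ->
      D_in (g i) (g (S i)) (fun y => a <= y <= b) x).

(* Main.v *)
Require Import Defs.
From Stdlib Require Import Reals Lra Lia Psatz.
Open Scope R_scope.

Inductive pd : nat -> (R -> R) -> Prop :=
| pd_c n c : pd n (fun _ => c)
| pd_add n p q : pd n p -> pd n q -> pd n (fun x => p x + q x)
| pd_scal n al p : pd n p -> pd n (fun x => al * p x)
| pd_x n p : pd n p -> pd (S n) (fun x => x * p x)
| pd_mono n p : pd n p -> pd (S n) p
| pd_ext n p q : pd n p -> (forall x, p x = q x) -> pd n q.

Lemma ann n p : pd n p -> forall N M (pt w : nat -> R), (n < N)%nat ->
  (forall j, (j < N)%nat -> sum_f_R0 (fun i => w i * pt i ^ j) M = 0) ->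
  sum_f_R0 (fun i => w i * p (pt i)) M = 0.
Proof.
  induction 1; intros N M pt w Hn Hm.
  - rewrite (sum_eq _ (fun i => w i * pt i ^ 0 * c)).
    + rewrite <- scal_sum, Hm by lia. ring.
    + intros; simpl; ring.
  - rewrite (sum_eq _ (fun i => w i * p (pt i) + w i * q (pt i))).
    + rewrite plus_sum, (IHpd1 N), (IHpd2 N); auto; ring.
    + intros; ring.
  - rewrite (sum_eq _ (fun i => w i * p (pt i) * al)).
    + rewrite <- scal_sum, (IHpd N); auto; ring.
    + intros; ring.
  - rewrite (sum_eq _ (fun i => (w i * pt i) * p (pt i))).
    + apply (IHpd (pred N)). lia.
      intros j Hj. rewrite <- (Hm (S j)) by lia. apply sum_eq; intros; simpl; ring.
    + intros; ring.
  - apply (IHpd N); auto; lia.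
  - rewrite (sum_eq _ (fun i => w i * p (pt i))).
    + apply (IHpd N); auto.
    + intros; rewrite H0; ring.
Qed.

Lemma pd_aff n q al be : pd n q -> pd (S n) (fun x => (al * x + be) * q x).
Proof.
  intro H. eapply pd_ext.
  apply pd_add. apply pd_x. apply (pd_scal _ al _ H). apply pd_mono. apply (pd_scal _ be _ H).
  intros; simpl; ring.
Qed.

Lemma pd_affpow j al be : pd j (fun x => (al * x + be) ^ j).
Proof.
  induction j.
  - eapply pd_ext. apply (pd_c 0 1). intros; simpl; ring.
  - eapply pd_ext. apply (pd_aff _ _ al be IHj). intros; simpl; ring.
Qed.

Lemma pd_pow j : pd j (fun x => x ^ j).
Proof. eapply pd_ext. apply (pd_affpow j 1 0). intros x; simpl; rewrite Rmult_1_l, Rplus_0_r; reflexivity. Qed.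

Fixpoint Qp (y : R) (j : nat) (x : R) : R :=
  match j with O => 0 | S j => x * Qp y j x + y ^ j end.

Lemma Qp_eq y j x : x ^ j - y ^ j = (x - y) * Qp y j x.
Proof. induction j; simpl. ring. replace (x * x ^ j - y * y ^ j) with (x * (x^j - y^j) + (x - y) * y ^ j) by ring.
  rewrite IHj; ring. Qed.

Lemma pd_Qp y j : pd j (Qp y (S j)).
Proof.
  induction j.
  - eapply pd_ext. apply (pd_c 0 1). intros; simpl; ring.
  - eapply pd_ext. apply pd_add. apply pd_x. apply IHj. apply pd_c.
    intros; reflexivity.
Qed.

Lemma decr_lt (pt : nat -> R) n : (forall i, (i < n)%nat -> pt (S i) < pt i) ->
  forall i j, (i < j)%nat -> (j <= n)%nat -> pt j < pt i.
Proof.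
  intros H i j Hij. induction j. lia. intros Hj.
  destruct (Nat.eq_dec i j). subst. apply H; lia.
  apply Rlt_trans with (pt j). apply H; lia. apply IHj; lia.
Qed.

Lemma sum_zero (F : nat -> R) n : (forall i, (i <= n)%nat -> F i = 0) -> sum_f_R0 F n = 0.
Proof. intros H; induction n; simpl. apply H; lia. rewrite IHn, H; intros; auto; try ring. Qed.

Lemma exist_dd k : forall pt : nat -> R, (forall i, (i < k)%nat -> pt (S i) < pt i) ->
  exists u : nat -> R, u 0%nat = 1 /\
   forall j, (j < k)%nat -> sum_f_R0 (fun i => u i * pt i ^ j) k = 0.
Proof.
  induction k; intros pt Hd.
  - exists (fun _ => 1). split; auto. intros; lia.
  - destruct (IHk pt) as [u [Hu0 Hum]]. intros; apply Hd; lia.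
    set (xk := pt (S k)).
    set (e := fun i => (pt 0%nat - xk) * u i / (pt i - xk)).
    exists (fun i => if (i <=? k)%nat then e i else - sum_f_R0 e k).
    assert (Hne : forall i, (i <= k)%nat -> pt i - xk <> 0).
    { intros i Hi. assert (pt (S k) < pt i) by (apply (decr_lt pt (S k)); auto; lia). unfold xk; lra. }
    split.
    + simpl. unfold e. rewrite Hu0. field. apply Hne; lia.
    + intros j Hj. rewrite tech5.
      replace (S k <=? k)%nat with false by (symmetry; apply Nat.leb_gt; lia).
      rewrite (sum_eq _ (fun i => e i * pt i ^ j)).
      2:{ intros i Hi. replace (i <=? k)%nat with true by (symmetry; apply Nat.leb_le; lia). auto. }
      fold xk.
      replace (sum_f_R0 (fun i => e i * pt i ^ j) k + - sum_f_R0 e k * xk ^ j)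
        with (sum_f_R0 (fun i => e i * pt i ^ j + - (e i * xk ^ j)) k).
      2:{ assert (Hs: sum_f_R0 (fun i => - (e i * xk ^ j)) k = (- xk^j) * sum_f_R0 e k).
          { rewrite scal_sum. apply sum_eq; intros; ring. }
          rewrite plus_sum, Hs; ring. }
      rewrite (sum_eq _ (fun i => ((pt 0%nat - xk) * u i) * Qp xk j (pt i))).
      2:{ intros i Hi. replace (e i * pt i ^ j + - (e i * xk ^ j)) with (e i * (pt i ^ j - xk ^ j)) by ring.
          rewrite Qp_eq. unfold e. field. apply Hne; auto. }
      destruct j.
      * apply sum_zero. intros; simpl; ring.
      * apply (ann j _ (pd_Qp xk j) k). lia.
        intros j' Hj'. rewrite (sum_eq _ (fun i => u i * pt i ^ j' * (pt 0%nat - xk))).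
        rewrite <- scal_sum, Hum by lia. ring. intros; ring.
Qed.

Definition cl a b y := Rmax a (Rmin b y).

Lemma cl_in a b y : a <= b -> a <= cl a b y <= b.
Proof. intros; unfold cl, Rmax, Rmin; repeat destruct Rle_dec; lra. Qed.
Lemma cl_id a b y : a <= y <= b -> cl a b y = y.
Proof. intros; unfold cl, Rmax, Rmin; repeat destruct Rle_dec; lra. Qed.
Lemma cl_lip a b y z : a <= b -> Rabs (cl a b y - cl a b z) <= Rabs (y - z).
Proof. intros; unfold cl, Rmax, Rmin, Rabs; repeat destruct Rle_dec; repeat destruct Rcase_abs; lra. Qed.

Lemma cont_cl a b h h1 : a <= b ->
  (forall y, a <= y <= b -> D_in h h1 (fun z => a <= z <= b) y) ->
  forall y, continuity_pt (fun t => h (cl a b t)) y.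
Proof.
  intros Hab HD y. set (y0 := cl a b y).
  assert (Hc := cont_deriv _ _ _ _ (HD y0 (cl_in a b y Hab))).
  unfold continuity_pt, continue_in, limit1_in, limit_in in *. simpl in *. unfold R_dist in *.
  intros eps Heps. destruct (Hc eps Heps) as [del [Hdel H]].
  exists del; split; auto. intros t [_ Ht].
  destruct (Req_dec (cl a b t) y0) as [E|E].
  - fold y0. rewrite E. rewrite Rminus_diag, Rabs_R0; lra.
  - apply H. split. split. apply cl_in; auto. auto.
    eapply Rle_lt_trans. apply cl_lip; auto. auto.
Qed.

Lemma deriv_cl a b h h1 u : a < u < b ->
  D_in h h1 (fun z => a <= z <= b) u ->
  derivable_pt_lim (fun t => h (cl a b t)) u (h1 u).
Proof.
  intros Hu HD. unfold D_in, limit1_in, limit_in, D_x in HD; simpl in HD; unfold R_dist in HD.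
  intros eps Heps. destruct (HD eps Heps) as [del [Hdel H]].
  assert (Hp : 0 < Rmin del (Rmin (u - a) (b - u))).
  { repeat apply Rmin_pos; lra. }
  exists (mkposreal _ Hp). intros hh Hh0 Hh. simpl in Hh.
  assert (Hb := Rmin_l del (Rmin (u - a) (b - u))).
  assert (Hb2 := Rmin_r del (Rmin (u - a) (b - u))).
  assert (Hb3 := Rmin_l (u - a) (b - u)).
  assert (Hb4 := Rmin_r (u - a) (b - u)).
  assert (Hr : a <= u + hh <= b /\ Rabs hh < del).
  { revert Hh; unfold Rabs; destruct Rcase_abs; intro Hh; lra. }
  rewrite (cl_id a b (u + hh)) by lra; rewrite (cl_id a b u) by lra.
  replace hh with (u + hh - u) at 2 by ring.
  apply H. split. split. lra. lra. replace (u + hh - u) with hh by ring. lra.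
Qed.

Lemma dpl_ext f g x l : (forall t, f t = g t) -> derivable_pt_lim f x l -> derivable_pt_lim g x l.
Proof. intros E H eps He. destruct (H eps He) as [d Hd]. exists d. intros. rewrite <- !E. auto. Qed.

Lemma cont_ext f g x : (forall t, f t = g t) -> continuity_pt f x -> continuity_pt g x.
Proof. intros E H. unfold continuity_pt, continue_in, limit1_in, limit_in in *.
  intros eps He. destruct (H eps He) as [d Hd]. exists d. destruct Hd as [Hd1 Hd2]. split; auto. intros; rewrite <- !E; apply Hd2; auto. Qed.

Lemma aff_der c d s : derivable_pt_lim (fun t => c + t * d) s d.
Proof. intros eps He. exists (mkposreal eps He). intros hh H0 H1.
  replace ((c + (s + hh) * d - (c + s * d)) / hh - d) with 0 by (field; auto).
  rewrite Rabs_R0; simpl; lra. Qed.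

Lemma sum_der (F : nat -> R -> R) (F' : nat -> R) N s :
  (forall i, (i <= N)%nat -> derivable_pt_lim (F i) s (F' i)) ->
  derivable_pt_lim (fun t => sum_f_R0 (fun i => F i t) N) s (sum_f_R0 F' N).
Proof.
  induction N; intros H; simpl. apply H; lia.
  apply (derivable_pt_lim_plus (fun t => sum_f_R0 (fun i => F i t) N) (F (S N))).
  apply IHN; intros; apply H; lia. apply H; lia.
Qed.

Lemma sum_cont (F : nat -> R -> R) N s :
  (forall i, (i <= N)%nat -> continuity_pt (F i) s) ->
  continuity_pt (fun t => sum_f_R0 (fun i => F i t) N) s.
Proof.
  induction N; intros H; simpl. apply H; lia.
  apply (continuity_pt_plus (fun t => sum_f_R0 (fun i => F i t) N) (F (S N))).
  apply IHN; intros; apply H; lia. apply H; lia.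
Qed.

Lemma core (a b c : R) (N : nat) (x w : nat -> R) (h h1 : R -> R) :
  a <= c <= b -> (forall i, (i <= N)%nat -> a <= x i <= b) ->
  sum_f_R0 w N = 0 ->
  (forall y, a <= y <= b -> D_in h h1 (fun z => a <= z <= b) y) ->
  exists xi, 0 < xi < 1 /\
   sum_f_R0 (fun i => w i * h (x i)) N =
   sum_f_R0 (fun i => w i * (x i - c) * h1 (c + xi * (x i - c))) N.
Proof.
  intros Hc Hx Hw HD.
  assert (Hab : a <= b) by lra.
  set (F := fun i t => w i * h (cl a b (c + t * (x i - c)))).
  set (G := fun t => sum_f_R0 (fun i => F i t) N).
  set (G' := fun s => sum_f_R0 (fun i => w i * (x i - c) * h1 (c + s * (x i - c))) N).
  assert (HG : forall s, 0 < s < 1 -> derivable_pt_lim G s (G' s)).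
  { intros s Hs. unfold G, G'.
    apply (sum_der F (fun i => w i * (x i - c) * h1 (c + s * (x i - c)))).
    intros i Hi. unfold F. destruct (Req_dec (x i) c) as [E|E].
    - rewrite E. replace (w i * (c - c) * h1 (c + s * (c - c))) with (w i * 0) by ring.
      apply (dpl_ext (mult_real_fct (w i) (fct_cte (h (cl a b c))))).
      + intros t. unfold mult_real_fct, fct_cte. repeat f_equal. ring.
      + apply derivable_pt_lim_scal. apply derivable_pt_lim_const.
    - replace (w i * (x i - c) * h1 (c + s * (x i - c))) with
        (w i * (h1 (c + s * (x i - c)) * (x i - c))) by ring.
      apply (dpl_ext (mult_real_fct (w i) (comp (fun t => h (cl a b t)) (fun t => c + t * (x i - c))))).
      + intros t; reflexivity.
      + apply derivable_pt_lim_scal. apply derivable_pt_lim_comp. apply aff_der.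
        apply deriv_cl.
        * specialize (Hx i Hi). destruct (Rlt_or_le (x i) c).
          -- split; nra.
          -- split; nra.
        * apply HD. specialize (Hx i Hi). split; nra. }
  assert (HC : forall s, continuity_pt G s).
  { intros s. unfold G. apply sum_cont. intros i Hi. unfold F.
    apply (cont_ext (mult_real_fct (w i) (comp (fun t => h (cl a b t)) (fun t => c + t * (x i - c))))).
    intros t; reflexivity.
    apply continuity_pt_scal. apply continuity_pt_comp.
    apply derivable_continuous_pt. exists (x i - c). apply aff_der.
    apply (cont_cl a b h h1); auto. }
  destruct (MVT G id 0 1 (fun s P => exist _ (G' s) (HG s P)) (fun s _ => derivable_pt_id s))
    as [xi [P Hxi]]; [lra | intros; apply HC | intros; apply derivable_continuous_pt, derivable_pt_id |].
  exists xi; split; [exact P|].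
  rewrite derive_pt_id in Hxi. simpl in Hxi. unfold id in Hxi.
  assert (G1 : G 1 = sum_f_R0 (fun i => w i * h (x i)) N).
  { unfold G, F. apply sum_eq. intros i Hi. rewrite cl_id. f_equal. f_equal. ring.
    specialize (Hx i Hi). lra. }
  assert (G0 : G 0 = 0).
  { unfold G, F. rewrite (sum_eq _ (fun i => w i * h (cl a b c))).
    rewrite <- scal_sum, Hw. ring.
    intros i Hi. replace (c + 0 * (x i - c)) with c by ring. reflexivity. }
  rewrite <- G1. unfold G' in Hxi. lra.
Qed.

Lemma mom0 (w pt : nat -> R) n : sum_f_R0 (fun i => w i * pt i ^ 0) n = 0 -> sum_f_R0 w n = 0.
Proof. intros H; rewrite <- H; apply sum_eq; intros; simpl; ring. Qed.

Lemma momshift (w pt : nat -> R) (c xi : R) N j : (S j < N)%nat ->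
  (forall j, (j < N)%nat -> sum_f_R0 (fun i => w i * pt i ^ j) N = 0) ->
  sum_f_R0 (fun i => w i * ((pt i - c) * (c + xi * (pt i - c)) ^ j)) N = 0.
Proof.
  intros Hj Hm.
  pose (p := fun x => (1*x + -c) * (xi*x + (c - xi*c))^j).
  transitivity (sum_f_R0 (fun i => w i * p (pt i)) N).
  { apply sum_eq; intros; unfold p. f_equal. f_equal. ring. f_equal. ring. }
  exact (ann (S j) p (pd_aff _ _ _ _ (pd_affpow j _ _)) N N pt w Hj Hm).
Qed.

Lemma Ppos n : forall a b (pt w : nat -> R) (g : nat -> R -> R),
 (forall i, (i < n)%nat -> pt (S i) < pt i) ->
 (forall i, (i <= n)%nat -> a <= pt i <= b) ->
 0 <= w 0%nat ->
 (forall j, (j < n)%nat -> sum_f_R0 (fun i => w i * pt i ^ j) n = 0) ->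
 (forall i x, (i < n)%nat -> a <= x <= b -> D_in (g i) (g (S i)) (fun y => a <= y <= b) x) ->
 (forall x, a <= x <= b -> 0 <= g n x) ->
 0 <= sum_f_R0 (fun i => w i * g 0%nat (pt i)) n.
Proof.
  induction n; intros a b pt w g Hd Hin Hw0 Hm HD Hp.
  - simpl. apply Rmult_le_pos; [auto|apply Hp, Hin; lia].
  - set (c := pt (S n)).
    assert (Hc : a <= c <= b) by (apply Hin; lia).
    assert (Hgt : forall i, (i <= n)%nat -> c < pt i).
    { intros i Hi. apply (decr_lt pt (S n)); auto; lia. }
    destruct (core a b c (S n) pt w (g 0%nat) (g 1%nat) Hc Hin) as [xi [Hxi E]].
    + apply (mom0 w pt). apply Hm; lia.
    + intros; apply HD; auto; lia.
    + rewrite E, tech5.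
      replace (w (S n) * (pt (S n) - c) * g 1%nat (c + xi * (pt (S n) - c))) with 0 by (unfold c; ring).
      rewrite Rplus_0_r.
      apply (IHn a b (fun i => c + xi * (pt i - c)) (fun i => w i * (pt i - c)) (fun i => g (S i))).
      * intros i Hi. assert (pt (S i) < pt i) by (apply Hd; lia). nra.
      * intros i Hi. assert (Hi' := Hin i ltac:(lia)). assert (c < pt i) by (apply Hgt; lia). split; nra.
      * apply Rmult_le_pos; auto. assert (c < pt 0%nat) by (apply Hgt; lia). lra.
      * intros j Hj. assert (Hs := momshift w pt c xi (S n) j ltac:(lia) Hm).
        rewrite tech5 in Hs. replace (pt (S n) - c) with 0 in Hs by (unfold c; ring).
        rewrite <- Hs. rewrite (sum_eq (fun i => w i * (pt i - c) * (c + xi * (pt i - c)) ^ j) (fun i => w i * ((pt i - c) * (c + xi * (pt i - c)) ^ j))) by (intros; ring).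
        ring.
      * intros i x Hi Hx. apply HD; auto; lia.
      * auto.
Qed.

Lemma Pneg n : forall a b (pt w : nat -> R) (g : nat -> R -> R),
 (forall i, (i < n)%nat -> pt (S i) < pt i) ->
 (forall i, (i <= n)%nat -> a <= pt i <= b) ->
 0 <= (-1) ^ n * w n ->
 (forall j, (j < n)%nat -> sum_f_R0 (fun i => w i * pt i ^ j) n = 0) ->
 (forall i x, (i < n)%nat -> a <= x <= b -> D_in (g i) (g (S i)) (fun y => a <= y <= b) x) ->
 (forall x, a <= x <= b -> 0 <= g n x) ->
 0 <= sum_f_R0 (fun i => w i * g 0%nat (pt i)) n.
Proof.
  induction n; intros a b pt w g Hd Hin Hw0 Hm HD Hp.
  - simpl. simpl in Hw0. apply Rmult_le_pos; [lra|]. apply Hp, Hin; lia.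
  - set (c := pt 0%nat).
    assert (Hc : a <= c <= b) by (apply Hin; lia).
    assert (Hgt : forall i, (0 < i <= S n)%nat -> pt i < c).
    { intros i Hi. apply (decr_lt pt (S n)); auto; lia. }
    destruct (core a b c (S n) pt w (g 0%nat) (g 1%nat) Hc Hin) as [xi [Hxi E]].
    + apply (mom0 w pt). apply Hm; lia.
    + intros; apply HD; auto; lia.
    + rewrite E, decomp_sum by lia. simpl pred.
      replace (w 0%nat * (pt 0%nat - c) * g 1%nat (c + xi * (pt 0%nat - c))) with 0 by (unfold c; ring).
      rewrite Rplus_0_l.
      apply (IHn a b (fun i => c + xi * (pt (S i) - c)) (fun i => w (S i) * (pt (S i) - c)) (fun i => g (S i))).
      * intros i Hi. assert (pt (S (S i)) < pt (S i)) by (apply Hd; lia). nra.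
      * intros i Hi. assert (Hi' := Hin (S i) ltac:(lia)). assert (pt (S i) < c) by (apply Hgt; lia). split; nra.
      * assert (pt (S n) < c) by (apply Hgt; lia). simpl in Hw0.
        replace ((-1) ^ n * (w (S n) * (pt (S n) - c))) with ((-1 * (-1) ^ n * w (S n)) * (c - pt (S n))) by ring.
        apply Rmult_le_pos; lra.
      * intros j Hj. assert (Hs := momshift w pt c xi (S n) j ltac:(lia) Hm).
        rewrite decomp_sum in Hs by lia. simpl pred in Hs. replace (pt 0%nat - c) with 0 in Hs by (unfold c; ring).
        rewrite <- Hs. rewrite (sum_eq (fun i => w (S i) * (pt (S i) - c) * (c + xi * (pt (S i) - c)) ^ j) (fun i => w (S i) * ((pt (S i) - c) * (c + xi * (pt (S i) - c)) ^ j))) by (intros; ring).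
        ring.
      * intros i x Hi Hx. apply HD; auto; lia.
      * auto.
Qed.

Theorem mainTheorem8 (k : nat) (hk : (0 < k)%nat) (a b : R)
  (pt w : nat -> R)
  (hdec : forall i : nat, (i < k + 1)%nat -> pt (S i) < pt i)
  (hin : forall i : nat, (i <= k + 1)%nat -> a <= pt i <= b)
  (hw1 : 0 <= w 0%nat)
  (hwlast : 0 <= (-1) ^ k * w (k + 1)%nat)
  (hmom : forall j : nat, (j < k)%nat ->
     sum_f_R0 (fun i => w i * pt i ^ j) (k + 1) = 0)
  (f : R -> R) (g : nat -> R -> R)
  (hf : kdiff_on k a b f g)
  (hpos : forall x, a <= x <= b -> 0 <= g k x) :
  0 <= sum_f_R0 (fun i => w i * f (pt i)) (k + 1).
Proof.
  destruct hf as [Hg0 HgD].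
  replace (k + 1)%nat with (S k) in * by lia.
  rewrite (sum_eq _ (fun i => w i * g 0%nat (pt i))).
  2:{ intros i Hi. rewrite Hg0; auto. }
  destruct (exist_dd k pt (fun i Hi => hdec i ltac:(lia))) as [u [Hu0 Hum]].
  set (U := fun i => if (i <=? k)%nat then w 0%nat * u i else 0).
  set (W := fun i => w i - U i).
  assert (HU : forall i, (i <= k)%nat -> U i = w 0%nat * u i).
  { intros i Hi. unfold U. replace (i <=? k)%nat with true by (symmetry; apply Nat.leb_le; lia). auto. }
  assert (HUk : U (S k) = 0).
  { unfold U. replace (S k <=? k)%nat with false by (symmetry; apply Nat.leb_gt; lia). auto. }
  assert (HW0 : W 0%nat = 0).
  { unfold W. rewrite HU by lia. rewrite Hu0. ring. }
  rewrite (sum_eq _ (fun i => U i * g 0%nat (pt i) + W i * g 0%nat (pt i))) by (intros; unfold W; ring).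
  rewrite plus_sum. apply Rplus_le_le_0_compat.
  - rewrite tech5, HUk, Rmult_0_l, Rplus_0_r.
    rewrite (sum_eq _ (fun i => (w 0%nat * u i) * g 0%nat (pt i))) by (intros; rewrite HU; auto).
    apply (Ppos k a b pt (fun i => w 0%nat * u i) g).
    + intros; apply hdec; lia.
    + intros; apply hin; lia.
    + rewrite Hu0; lra.
    + intros j Hj. rewrite (sum_eq _ (fun i => u i * pt i ^ j * w 0%nat)) by (intros; ring).
      rewrite <- scal_sum, Hum; auto; ring.
    + intros; apply HgD; auto.
    + auto.
  - rewrite decomp_sum by lia. simpl pred. rewrite HW0, Rmult_0_l, Rplus_0_l.
    apply (Pneg k a b (fun i => pt (S i)) (fun i => W (S i)) g).
    + intros; apply hdec; lia.
    + intros; apply hin; lia.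
    + unfold W. rewrite HUk. rewrite Rminus_0_r. auto.
    + intros j Hj.
      assert (Hs : sum_f_R0 (fun i => W i * pt i ^ j) (S k) = 0).
      { rewrite (sum_eq _ (fun i => w i * pt i ^ j + - (U i * pt i ^ j))) by (intros; unfold W; ring).
        rewrite plus_sum, hmom by auto.
        assert (H2 : sum_f_R0 (fun i => - (U i * pt i ^ j)) (S k) = -1 * sum_f_R0 (fun i => U i * pt i ^ j) (S k)).
        { rewrite scal_sum. apply sum_eq; intros; ring. }
        rewrite H2, tech5, HUk.
        rewrite (sum_eq _ (fun i => u i * pt i ^ j * w 0%nat)) by (intros; rewrite HU; auto; ring).
        rewrite <- scal_sum, Hum; auto; ring. }
      rewrite decomp_sum in Hs by lia. simpl pred in Hs. rewrite HW0 in Hs. lra.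
    + intros; apply HgD; auto.
    + auto.
Qed.
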